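(* Let $X_0^*$ be a $\{1,2,\dots\}$-valued random variable with $\mathbf P(X_0^*\ge2)>0$ and $\mathbf E(X_0^*m^{X_0^*})<\infty$, let $p>p_c$, let $X_0$ have law $(1-p)\delta_0+pP_{X_0^*}$, and let $n\ge0$. Then $$[\delta_n-\varphi_n(s)]^2\le 2\,(H_n(0)+\delta_n)\,\Theta_n(s),\qquad s\in(0,m).$$
   Context: Fix an integer $m\ge2$. Recursive system: $X_{n+1}$ has the law of $(X_{n,1}+\cdots+X_{n,m}-1)^+$, with $X_{n,i}$ independent copies of $X_n$. $p_c:=\frac{1}{1+\mathbf E\{[(m-1)X_0^*-1]m^{X_0^*}\}}$. $H_n(s):=\mathbf E(s^{X_n})$; $\delta_n:=(m-1)\mathbf E(X_nm^{X_n})-\mathbf E(m^{X_n})$; $\varphi_n(s):=(m-1)sH_n'(s)-H_n(s)$; and $$\Theta_n(s):=[H_n(s)-s(s-1)H_n'(s)]-\frac{(m-1)(m-s)}{m}[2sH_n'(s)+s^2H_n''(s)]+\delta_n .$$ *)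

(* Defs.v *)
From Stdlib Require Import Reals Lra ClassicalEpsilon.
Open Scope R_scope.

(* Value of a real series sum_{k>=0} f k (meaningful when it converges;
   an arbitrary real otherwise). *)
Definition series (f : nat -> R) : R :=
  epsilon (inhabits 0) (fun l => infinite_sum f l).

Definition is_law (mu : nat -> R) : Prop :=
  (forall k, 0 <= mu k) /\ infinite_sum mu 1.

Definition expect (mu : nat -> R) (f : nat -> R) : R :=
  series (fun k => mu k * f k).

Definition conv (a b : nat -> R) : nat -> R :=
  fun k => sum_f_R0 (fun i => a i * b (k - i)%nat) k.

Fixpoint conv_pow (a : nat -> R) (j : nat) : nat -> R :=
  match j with
  | O => fun k => if Nat.eqb k 0 then 1 else 0
  | S j' => conv a (conv_pow a j')
  end.

(* One step of the recursive system: law of (X_1+...+X_m - 1)^+. *)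
Definition step (m : nat) (a : nat -> R) : nat -> R :=
  fun k => match k with
           | O => conv_pow a m 0%nat + conv_pow a m 1%nat
           | S k' => conv_pow a m (S (S k'))
           end.

Definition law (m : nat) (mu0 : nat -> R) (n : nat) : nat -> R :=
  Nat.iter n (step m) mu0.

Definition init_law (p : R) (q : nat -> R) : nat -> R :=
  fun k => (if Nat.eqb k 0 then 1 - p else 0) + p * q k.

Definition p_crit (m : nat) (q : nat -> R) : R :=
  1 / (1 + expect q (fun k => ((INR m - 1) * INR k - 1) * INR m ^ k)).

(* H_n(s) = E(s^{X_n}), and its first two derivatives (termwise). *)
Definition Hn (m : nat) (mu0 : nat -> R) (n : nat) (s : R) : R :=
  expect (law m mu0 n) (fun k => s ^ k).
Definition dHn (m : nat) (mu0 : nat -> R) (n : nat) (s : R) : R :=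
  expect (law m mu0 n) (fun k => INR k * s ^ (k - 1)).
Definition d2Hn (m : nat) (mu0 : nat -> R) (n : nat) (s : R) : R :=
  expect (law m mu0 n) (fun k => INR k * INR (k - 1) * s ^ (k - 2)).

Definition delta_n (m : nat) (mu0 : nat -> R) (n : nat) : R :=
  (INR m - 1) * expect (law m mu0 n) (fun k => INR k * INR m ^ k)
  - expect (law m mu0 n) (fun k => INR m ^ k).

Definition phi_n (m : nat) (mu0 : nat -> R) (n : nat) (s : R) : R :=
  (INR m - 1) * s * dHn m mu0 n s - Hn m mu0 n s.

Definition Theta_n (m : nat) (mu0 : nat -> R) (n : nat) (s : R) : R :=
  (Hn m mu0 n s - s * (s - 1) * dHn m mu0 n s)
  - (INR m - 1) * (INR m - s) / INR m
      * (2 * s * dHn m mu0 n s + s ^ 2 * d2Hn m mu0 n s)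
  + delta_n m mu0 n.

(* Main.v *)
Require Import Defs.
From Stdlib Require Import Reals Lra Lia Psatz ClassicalEpsilon.
From Coquelicot Require Import Coquelicot.
Open Scope R_scope.


Lemma is_series_zero : is_series (fun _ : nat => 0) 0.
Proof.
  assert (H := is_series_scal_r 0 _ _ (is_series_geom 0 ltac:(rewrite Rabs_R0; lra))).
  rewrite Rmult_0_r in H. eapply is_series_ext; [|exact H]. intros; simpl; ring.
Qed.

Lemma is_series_ge0 (f : nat -> R) l : is_series f l -> (forall k, 0 <= f k) -> 0 <= l.
Proof.
  intros H Hf. rewrite <- (is_series_unique _ _ H).
  rewrite <- (is_series_unique _ _ is_series_zero).
  apply Series_le. intros; split; [lra| apply Hf]. exists l; exact H.
Qed.

Lemma series_val (f : nat -> R) l : is_series f l -> series f = l.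
Proof.
  intros H. apply is_series_Reals in H. unfold series.
  apply (uniqueness_sum f). apply epsilon_spec. exists l; exact H. exact H.
Qed.

Lemma ex_series_bound (a g : nat -> R) : (forall k, 0 <= a k <= g k) -> ex_series g -> ex_series a.
Proof.
  intros H Hg. apply (ex_series_le a g); auto.
  intros n. change (norm (a n)) with (Rabs (a n)). rewrite Rabs_pos_eq; apply H.
Qed.


Definition Good (M : R) (a : nat -> R) : Prop :=
  (forall k, 0 <= a k) /\ ex_series (fun k => a k * M ^ k) /\
  ex_series (fun k => a k * (INR k * M ^ k)).

Lemma Good_ext M a b : (forall k, a k = b k) -> Good M a -> Good M b.
Proof.
  intros E [H1 [H2 H3]]. split; [|split].
  - intros k; rewrite <- E; auto.
  - eapply ex_series_ext; [|exact H2]. intros; simpl; rewrite E; auto.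
  - eapply ex_series_ext; [|exact H3]. intros; simpl; rewrite E; auto.
Qed.

Lemma pow_split M k i : (i <= k)%nat -> M ^ k = M ^ i * M ^ (k - i).
Proof. intros H. rewrite <- pow_add. f_equal. lia. Qed.

Lemma conv_good M a b : 0 <= M -> Good M a -> Good M b -> Good M (conv a b).
Proof.
  intros HM [a0 [[la1 a1] [la2 a2]]] [b0 [[lb1 b1] [lb2 b2]]].
  assert (pa : forall k, 0 <= a k * M ^ k) by (intros; apply Rmult_le_pos; auto; apply pow_le; auto).
  assert (pb : forall k, 0 <= b k * M ^ k) by (intros; apply Rmult_le_pos; auto; apply pow_le; auto).
  assert (pa' : forall k, 0 <= a k * (INR k * M ^ k)) by (intros; apply Rmult_le_pos; auto; apply Rmult_le_pos; [apply pos_INR|apply pow_le; auto]).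
  assert (pb' : forall k, 0 <= b k * (INR k * M ^ k)) by (intros; apply Rmult_le_pos; auto; apply Rmult_le_pos; [apply pos_INR|apply pow_le; auto]).
  split; [|split].
  - intros k; unfold conv; apply cond_pos_sum; intros; apply Rmult_le_pos; auto.
  - exists (la1 * lb1).
    eapply is_series_ext; [|apply (is_series_mult_pos _ _ _ _ a1 b1); auto].
    intros k; unfold conv. rewrite Rmult_comm, scal_sum. apply sum_eq.
    intros i Hi. rewrite (pow_split M k i Hi). ring.
  - exists (la2 * lb1 + la1 * lb2).
    eapply is_series_ext; [|apply (is_series_plus _ _ _ _ (is_series_mult_pos _ _ _ _ a2 b1 pa' pb) (is_series_mult_pos _ _ _ _ a1 b2 pa pb'))].
    intros k; unfold conv. simpl. change (plus ?x ?y) with (x + y).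
    rewrite <- sum_plus. rewrite Rmult_comm, scal_sum. apply sum_eq.
    intros i Hi. rewrite (pow_split M k i Hi).
    replace (INR k) with (INR i + INR (k - i)) by (rewrite <- plus_INR; f_equal; lia). ring.
Qed.

Definition delta0 : nat -> R := fun k => if Nat.eqb k 0 then 1 else 0.

Lemma delta0_good M : Good M delta0.
Proof.
  assert (E : forall (g : nat -> R), ex_series (fun k => delta0 k * g k)).
  { intros g. apply ex_series_incr_1. eapply ex_series_ext; [|exists 0; exact is_series_zero].
    intros k; unfold delta0; simpl. ring. }
  split; [|split]; auto.
  intros k; unfold delta0; destruct (Nat.eqb k 0); lra.
Qed.

Lemma conv_pow_good M a j : 0 <= M -> Good M a -> Good M (conv_pow a j).
Proof.
  intros HM Ha. induction j as [|j IH].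
  - exact (delta0_good M).
  - simpl. apply conv_good; auto.
Qed.

Lemma shift2 (f : nat -> R) : ex_series f -> ex_series (fun k => f (S (S k))).
Proof.
  intros H. pose proof (proj1 (ex_series_incr_1 f) H) as h1.
  exact (proj1 (ex_series_incr_1 _) h1).
Qed.

Lemma step_good (m : nat) M a : 1 <= M -> Good M a -> Good M (step m a).
Proof.
  intros HM Ha. destruct (conv_pow_good M a m ltac:(lra) Ha) as [c0 [c1 c2]].
  set (c := conv_pow a m) in *.
  assert (Mp : forall k, 0 <= M ^ k) by (intros; apply pow_le; lra).
  assert (Mi : forall k, M ^ k <= M ^ (S k)) by (intros; simpl; specialize (Mp k); nra).
  split; [|split].
  - intros [|k]; unfold step; fold c; [pose proof (c0 0%nat); pose proof (c0 1%nat); lra| apply c0].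
  - apply (proj2 (ex_series_incr_1 _)). unfold step; fold c.
    apply (ex_series_bound _ (fun k => c (S (S k)) * M ^ (S (S k)))).
    + intros k; split; [apply Rmult_le_pos; auto|]. apply Rmult_le_compat_l; auto.
    + apply (shift2 (fun k => c k * M ^ k)); auto.
  - apply (proj2 (ex_series_incr_1 _)). unfold step; fold c.
    apply (ex_series_bound _ (fun k => c (S (S k)) * (INR (S (S k)) * M ^ (S (S k))))).
    + intros k; split; [apply Rmult_le_pos; auto; apply Rmult_le_pos; auto; apply pos_INR|].
      apply Rmult_le_compat_l; auto. apply Rmult_le_compat; auto. apply pos_INR.
      apply le_INR; lia.
    + apply (shift2 (fun k => c k * (INR k * M ^ k))); auto.
Qed.

Lemma law_good (m : nat) M mu0 n : 1 <= M -> Good M mu0 -> Good M (law m mu0 n).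
Proof.
  intros HM H. induction n as [|n IH]; [exact H|]. simpl. apply step_good; auto.
Qed.


Lemma powx_bounds x k : 0 <= x <= 1 -> 0 <= x ^ k <= 1.
Proof. intros H. split. apply pow_le; lra. rewrite <- (pow1 k). apply pow_incr; lra. Qed.

Lemma L1 x k : 0 <= x <= 1 -> INR k * (1 - x) * x ^ k <= 1 - x ^ k.
Proof.
  intros H. induction k as [|k IH]. simpl; lra.
  rewrite S_INR. simpl. pose proof (powx_bounds x k H) as [X0 X1].
  assert (x * x ^ k <= x ^ k) by nra.
  assert (0 <= (INR k + 1) * (1 - x)) by (pose proof (pos_INR k); nra).
  nra.
Qed.

Lemma L2 x k : 0 <= x <= 1 -> 1 - x ^ k <= INR k * (1 - x).
Proof.
  intros H. induction k as [|k IH]. simpl; lra.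
  rewrite S_INR. simpl. pose proof (powx_bounds x k H). nra.
Qed.

Lemma L3 x k : 0 <= x <= 1 -> 2 * INR k * x ^ k * (1 - x) <= 1 - (x ^ k) ^ 2.
Proof.
  intros H. induction k as [|k IH]. simpl; lra.
  pose proof (L2 x k H) as H2. pose proof (powx_bounds x k H) as [X0 X1].
  set (X := x ^ k) in *.
  assert (B : 0 <= X + x * X - 2 * x + 2 * INR k * (1 - x)) by nra.
  assert (E : 1 - (x ^ S k) ^ 2 - 2 * INR (S k) * x ^ S k * (1 - x)
    = (1 - X ^ 2 - 2 * INR k * X * (1 - x)) + (1 - x) * X * (X + x * X - 2 * x + 2 * INR k * (1 - x))).
  { rewrite S_INR. simpl. unfold X. ring. }
  assert (0 <= (1 - x) * X * (X + x * X - 2 * x + 2 * INR k * (1 - x))).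
  { apply Rmult_le_pos; auto. apply Rmult_le_pos; lra. }
  lra.
Qed.

Lemma alg M x N A X : 2 <= M -> 0 <= x <= 1 -> 1 <= N -> 0 < A -> 0 <= X <= 1 ->
  2 * N * X * (1 - x) <= 1 - X ^ 2 ->
  let s := x * M in
  let c := (M - 1) * (N * A) - A in
  let u := c - ((M - 1) * (N * (X * A)) - X * A) in
  let th := (X * A - (s - 1) * (N * (X * A))) - (M - 1) * (M - s) / M * (2 * (N * (X * A)) + N * (N - 1) * (X * A)) + c in
  0 <= c /\ 0 <= th /\ u ^ 2 <= 2 * c * th.
Proof.
  intros HM Hx HN HA HX H3 s c u th.
  set (K := (M - 1) * N - 1).
  assert (HK : 0 <= K) by (unfold K; nra).
  assert (Ec : c = K * A) by (unfold c, K; ring).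
  assert (Eu : u = K * (A - X * A)) by (unfold u, c, K; ring).
  assert (Eth : 2 * A * th = K * (A - X * A) ^ 2 + K * A ^ 2 * ((1 - X ^ 2) - 2 * N * X * (1 - x))).
  { unfold th, c, s, K. field. lra. }
  assert (P : 0 <= K * A ^ 2 * ((1 - X ^ 2) - 2 * N * X * (1 - x))).
  { apply Rmult_le_pos; [apply Rmult_le_pos; [lra| nra]| lra]. }
  assert (P2 : 0 <= K * (A - X * A) ^ 2) by (apply Rmult_le_pos; [lra| apply pow2_ge_0]).
  assert (Hth : 0 <= th) by nra.
  split; [rewrite Ec; nra| split; auto].
  rewrite Eu, Ec. 
  assert (2 * (K * A) * th = K * (2 * A * th)) by ring.
  rewrite H, Eth. nra.
Qed.

Definition cK M k := 0 ^ k + ((M - 1) * (INR k * M ^ k) - M ^ k).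
Definition uK M s k := ((M - 1) * (INR k * M ^ k) - M ^ k) - ((M - 1) * s * (INR k * s ^ (k - 1)) - s ^ k).
Definition thK M s k := (s ^ k - s * (s - 1) * (INR k * s ^ (k - 1)))
  - (M - 1) * (M - s) / M * (2 * s * (INR k * s ^ (k - 1)) + s ^ 2 * (INR k * INR (k - 1) * s ^ (k - 2)))
  + ((M - 1) * (INR k * M ^ k) - M ^ k).

Lemma pointwise_gen M x k : 2 <= M -> 0 < x < 1 -> (1 <= k)%nat ->
  let s := x * M in
  INR k * s ^ (k - 1) * s = INR k * s ^ k ->
  INR k * INR (k - 1) * s ^ (k - 2) * s ^ 2 = INR k * (INR k - 1) * s ^ k ->
  0 <= cK M k /\ 0 <= thK M s k /\ uK M s k ^ 2 <= 2 * cK M k * thK M s k.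
Proof.
  intros HM Hx Hk s E2 E3.
  assert (HN : 1 <= INR k) by (apply (le_INR 1); auto).
  assert (HA : 0 < M ^ k) by (apply pow_lt; lra).
  pose proof (powx_bounds x k ltac:(lra)) as HX.
  pose proof (L3 x k ltac:(lra)) as H3.
  destruct (alg M x (INR k) (M ^ k) (x ^ k) HM ltac:(lra) HN HA HX H3) as [h1 [h2 h3]].
  cbv zeta in h1, h2, h3.
  assert (Es : s ^ k = x ^ k * M ^ k) by (unfold s; apply Rpow_mult_distr).
  assert (E0 : 0 ^ k = 0) by (apply pow_i; lia).
  assert (Ec : cK M k = (M - 1) * (INR k * M ^ k) - M ^ k) by (unfold cK; rewrite E0; ring).
  assert (Eu : uK M s k = (M - 1) * (INR k * M ^ k) - M ^ k - ((M - 1) * (INR k * (x ^ k * M ^ k)) - x ^ k * M ^ k)).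
  { unfold uK. rewrite <- Es. replace ((M - 1) * s * (INR k * s ^ (k - 1))) with ((M-1) * (INR k * s ^ (k - 1) * s)) by ring.
    rewrite E2. ring. }
  assert (Eth : thK M s k = x ^ k * M ^ k - (x * M - 1) * (INR k * (x ^ k * M ^ k)) -
     (M - 1) * (M - x * M) / M * (2 * (INR k * (x ^ k * M ^ k)) + INR k * (INR k - 1) * (x ^ k * M ^ k)) +
     ((M - 1) * (INR k * M ^ k) - M ^ k)).
  { unfold thK. rewrite <- Es.
    replace (s * (s - 1) * (INR k * s ^ (k - 1))) with ((s - 1) * (INR k * s ^ (k - 1) * s)) by ring.
    replace (2 * s * (INR k * s ^ (k - 1))) with (2 * (INR k * s ^ (k - 1) * s)) by ring.
    replace (s ^ 2 * (INR k * INR (k - 1) * s ^ (k - 2))) with (INR k * INR (k - 1) * s ^ (k - 2) * s ^ 2) by ring.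
    rewrite E2, E3. unfold s. ring. }
  rewrite Ec, Eu, Eth. auto.
Qed.

Lemma E2_gen s k : (1 <= k)%nat -> INR k * s ^ (k - 1) * s = INR k * s ^ k.
Proof.
  intros H. destruct k as [|j]; [lia|]. replace (S j - 1)%nat with j by lia. simpl. ring.
Qed.

Lemma E3_gen s k : INR k * INR (k - 1) * s ^ (k - 2) * s ^ 2 = INR k * (INR k - 1) * s ^ k.
Proof.
  destruct k as [|[|i]].
  - simpl. ring.
  - simpl. ring.
  - replace (S (S i) - 1)%nat with (S i) by lia. replace (S (S i) - 2)%nat with i by lia.
    rewrite !S_INR. simpl. ring.
Qed.

Lemma pointwise M s k : 2 <= M -> 0 < s < M ->
  0 <= cK M k /\ 0 <= thK M s k /\ uK M s k ^ 2 <= 2 * cK M k * thK M s k.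
Proof.
  intros HM Hs. destruct k as [|j].
  - unfold cK, thK, uK. simpl. repeat split; nra.
  - set (x := s / M).
    assert (Exs : s = x * M) by (unfold x; field; lra).
    assert (Hx : 0 < x < 1).
    { split; unfold x. apply Rdiv_lt_0_compat; lra.
      apply (Rmult_lt_reg_r M); [lra|]. unfold Rdiv. rewrite Rmult_assoc, Rinv_l; lra. }
    rewrite Exs. apply pointwise_gen; auto. lia. apply E2_gen; lia. apply E3_gen.
Qed.


Lemma ex_good_bound M mu g C1 C2 : Good M mu ->
  (forall k, 0 <= g k <= C1 * M ^ k + C2 * (INR k * M ^ k)) ->
  ex_series (fun k => mu k * g k).
Proof.
  intros [H0 [H1 H2]] Hg.
  apply (ex_series_bound _ (fun k => C1 * (mu k * M ^ k) + C2 * (mu k * (INR k * M ^ k)))).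
  - intros k; specialize (Hg k); specialize (H0 k). split; [nra|]. nra.
  - apply (ex_series_plus (fun k => C1 * (mu k * M ^ k)) (fun k => C2 * (mu k * (INR k * M ^ k)))).
    apply (ex_series_scal C1 (fun k => mu k * M ^ k)); auto.
    apply (ex_series_scal C2 (fun k => mu k * (INR k * M ^ k))); auto.
Qed.

Lemma lin_step (f g : nat -> R) lf lg a : is_series f lf -> is_series g lg ->
  is_series (fun k => f k + a * g k) (lf + a * lg).
Proof.
  intros Hf Hg. apply (is_series_plus f (fun k => a * g k)); auto.
  apply (is_series_scal a g); auto.
Qed.

Lemma quad C U T : (forall t, 0 <= C * t ^ 2 + 2 * U * t + 2 * T) -> 0 <= C -> U ^ 2 <= 2 * C * T.
Proof.
  intros H HC. destruct (Req_dec C 0) as [E|E].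
  - subst C. destruct (Req_dec U 0) as [EU|EU].
    + subst U. specialize (H 0). nra.
    + specialize (H (- (T + 1) / U)). exfalso.
      assert (2 * U * (- (T + 1) / U) = - 2 * (T + 1)) by (field; auto). nra.
  - specialize (H (- U / C)).
    assert (C * (- U / C) ^ 2 + 2 * U * (- U / C) = - U ^ 2 / C) by (field; auto).
    assert (0 <= - U ^ 2 / C + 2 * T) by lra.
    assert (0 <= (- U ^ 2 / C + 2 * T) * C) by (apply Rmult_le_pos; lra).
    assert ((- U ^ 2 / C + 2 * T) * C = - U ^ 2 + 2 * C * T) by (field; auto). nra.
Qed.

Lemma quad_pt c u th t : 0 <= c -> 0 <= th -> u ^ 2 <= 2 * c * th -> 0 <= c * t ^ 2 + 2 * u * t + 2 * th.
Proof.
  intros Hc Ht Hu. destruct (Req_dec c 0) as [E|E].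
  - subst c. assert (u = 0) by nra. subst u. nra.
  - assert (c * (c * t ^ 2 + 2 * u * t + 2 * th) = (c * t + u) ^ 2 + (2 * c * th - u ^ 2)) by ring.
    assert (0 < c) by lra. assert (0 <= (c * t + u) ^ 2) by apply pow2_ge_0. nra.
Qed.

Lemma main_ineq M s mu : 2 <= M -> 0 < s < M -> Good M mu ->
  let D := (M - 1) * expect mu (fun k => INR k * M ^ k) - expect mu (fun k => M ^ k) in
  (D - ((M - 1) * s * expect mu (fun k => INR k * s ^ (k - 1)) - expect mu (fun k => s ^ k))) ^ 2
  <= 2 * (expect mu (fun k => 0 ^ k) + D) *
     ((expect mu (fun k => s ^ k) - s * (s - 1) * expect mu (fun k => INR k * s ^ (k - 1)))
      - (M - 1) * (M - s) / M * (2 * s * expect mu (fun k => INR k * s ^ (k - 1))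
          + s ^ 2 * expect mu (fun k => INR k * INR (k - 1) * s ^ (k - 2))) + D).
Proof.
  intros HM Hs HG D.
  assert (Mp : forall k, 0 <= M ^ k) by (intros; apply pow_le; lra).
  assert (Np : forall k, 0 <= INR k * M ^ k) by (intros; apply Rmult_le_pos; [apply pos_INR|auto]).
  assert (X0 : ex_series (fun k => mu k * 0 ^ k)).
  { apply (ex_good_bound M mu _ 1 0 HG). intros k; split. apply pow_le; lra.
    assert (0 ^ k <= M ^ k) by (apply pow_incr; lra). nra. }
  assert (X1 : ex_series (fun k => mu k * M ^ k)) by apply HG.
  assert (X2 : ex_series (fun k => mu k * (INR k * M ^ k))) by apply HG.
  assert (Y1 : ex_series (fun k => mu k * s ^ k)).
  { apply (ex_good_bound M mu _ 1 0 HG). intros k; split. apply pow_le; lra.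
    assert (s ^ k <= M ^ k) by (apply pow_incr; lra). nra. }
  assert (Y2 : ex_series (fun k => mu k * (INR k * s ^ (k - 1)))).
  { apply (ex_good_bound M mu _ 0 (1 / s) HG). intros k.
    assert (P : 0 <= INR k * s ^ (k - 1)) by (apply Rmult_le_pos; [apply pos_INR| apply pow_le; lra]).
    split; auto. destruct k as [|j]. simpl; nra.
    pose proof (E2_gen s (S j) ltac:(lia)) as E.
    assert (s ^ S j <= M ^ S j) by (apply pow_incr; lra).
    assert (INR (S j) * s ^ S j <= INR (S j) * M ^ S j) by (apply Rmult_le_compat_l; [apply pos_INR|auto]).
    assert (INR (S j) * s ^ (S j - 1) = (1 / s) * (INR (S j) * s ^ S j)) by (rewrite <- E; field; lra).
    assert (0 < 1 / s) by (apply Rdiv_lt_0_compat; lra). nra. }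
  set (x := s / M).
  assert (Hx : 0 < x < 1).
  { split; unfold x. apply Rdiv_lt_0_compat; lra.
    apply (Rmult_lt_reg_r M); [lra|]. unfold Rdiv. rewrite Rmult_assoc, Rinv_l; lra. }
  assert (Exs : s = x * M) by (unfold x; field; lra).
  assert (Y3 : ex_series (fun k => mu k * (INR k * INR (k - 1) * s ^ (k - 2)))).
  { apply (ex_good_bound M mu _ 0 (1 / (s ^ 2 * (1 - x))) HG). intros k.
    assert (P : 0 <= INR k * INR (k - 1) * s ^ (k - 2)) by
      (apply Rmult_le_pos; [apply Rmult_le_pos; apply pos_INR| apply pow_le; lra]).
    split; auto.
    pose proof (E3_gen s k) as E.
    pose proof (L1 x k ltac:(lra)) as HL.
    pose proof (powx_bounds x k ltac:(lra)) as HX.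
    assert (Es : s ^ k = x ^ k * M ^ k) by (rewrite Exs; apply Rpow_mult_distr).
    assert (HN : 0 <= INR k) by apply pos_INR.
    assert (s2 : 0 < s ^ 2) by nra.
    assert (A1 : INR k * (INR k - 1) * s ^ k <= INR k * M ^ k * (1 / (1 - x))).
    { rewrite Es. assert (INR k * x ^ k <= 1 / (1 - x)).
      { apply (Rmult_le_reg_r (1 - x)); [lra|]. unfold Rdiv. rewrite Rmult_1_l, Rinv_l; nra. }
      assert (0 <= INR k * M ^ k) by auto.
      assert (INR k * (INR k - 1) * (x ^ k * M ^ k) = (INR k * M ^ k) * ((INR k - 1) * x ^ k)) by ring.
      assert ((INR k - 1) * x ^ k <= 1 / (1 - x)) by nra. nra. }
    assert (E' : INR k * INR (k - 1) * s ^ (k - 2) = INR k * (INR k - 1) * s ^ k / s ^ 2) by (rewrite <- E; field; lra).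
    rewrite E'. apply (Rmult_le_reg_r (s ^ 2)); auto.
    replace (INR k * (INR k - 1) * s ^ k / s ^ 2 * s ^ 2) with (INR k * (INR k - 1) * s ^ k) by (field; lra).
    replace ((0 * M ^ k + 1 / (s ^ 2 * (1 - x)) * (INR k * M ^ k)) * s ^ 2) with (INR k * M ^ k * (1 / (1 - x))) by (field; lra).
    auto. }
  apply Series_correct in X0, X1, X2, Y1, Y2, Y3.
  unfold D, expect. clear D.
  rewrite (series_val _ _ X0), (series_val _ _ X1), (series_val _ _ X2),
    (series_val _ _ Y1), (series_val _ _ Y2), (series_val _ _ Y3).
  set (l0 := Series (fun k => mu k * 0 ^ k)) in *.
  set (l1 := Series (fun k => mu k * M ^ k)) in *.
  set (l2 := Series (fun k => mu k * (INR k * M ^ k))) in *.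
  set (m1 := Series (fun k => mu k * s ^ k)) in *.
  set (m2 := Series (fun k => mu k * (INR k * s ^ (k - 1)))) in *.
  set (m3 := Series (fun k => mu k * (INR k * INR (k - 1) * s ^ (k - 2)))) in *.
  destruct HG as [Hmu _].
  assert (Q : forall c0 c1 c2 d1 d2 d3,
    (forall k, 0 <= c0 * 0 ^ k + c1 * M ^ k + c2 * (INR k * M ^ k) + d1 * s ^ k
       + d2 * (INR k * s ^ (k - 1)) + d3 * (INR k * INR (k - 1) * s ^ (k - 2))) ->
    0 <= c0 * l0 + c1 * l1 + c2 * l2 + d1 * m1 + d2 * m2 + d3 * m3).
  { intros c0 c1 c2 d1 d2 d3 Hk.
    pose proof (lin_step _ _ _ _ c0 is_series_zero X0) as h.
    pose proof (lin_step _ _ _ _ c1 h X1) as h'. clear h.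
    pose proof (lin_step _ _ _ _ c2 h' X2) as h. clear h'.
    pose proof (lin_step _ _ _ _ d1 h Y1) as h'. clear h.
    pose proof (lin_step _ _ _ _ d2 h' Y2) as h. clear h'.
    pose proof (lin_step _ _ _ _ d3 h Y3) as h'. clear h.
    apply is_series_ge0 in h'.
    - replace (c0 * l0 + c1 * l1 + c2 * l2 + d1 * m1 + d2 * m2 + d3 * m3) with
        (0 + c0 * l0 + c1 * l1 + c2 * l2 + d1 * m1 + d2 * m2 + d3 * m3) by ring. exact h'.
    - intros k. cbv beta. specialize (Hk k). specialize (Hmu k).
      match goal with |- 0 <= ?e => replace e with (mu k * (c0 * 0 ^ k + c1 * M ^ k + c2 * (INR k * M ^ k) + d1 * s ^ k
       + d2 * (INR k * s ^ (k - 1)) + d3 * (INR k * INR (k - 1) * s ^ (k - 2)))) by ring end.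
      apply Rmult_le_pos; auto. }
  apply quad.
  - intros t.
    pose proof (Q (t ^ 2) (- t ^ 2 - 2 * t - 2) ((M - 1) * (t ^ 2 + 2 * t + 2)) (2 * t + 2)
      (- 2 * t * (M - 1) * s - 2 * s * (s - 1) - 4 * s * (M - 1) * (M - s) / M)
      (- 2 * (M - 1) * (M - s) / M * s ^ 2)) as HQ.
    match goal with |- 0 <= ?e => replace e with
      (t ^ 2 * l0 + (- t ^ 2 - 2 * t - 2) * l1 + (M - 1) * (t ^ 2 + 2 * t + 2) * l2 + (2 * t + 2) * m1
       + (- 2 * t * (M - 1) * s - 2 * s * (s - 1) - 4 * s * (M - 1) * (M - s) / M) * m2
       + (- 2 * (M - 1) * (M - s) / M * s ^ 2) * m3) by (field; lra) end.
    apply HQ. intros k.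
    destruct (pointwise M s k HM Hs) as [p1 [p2 p3]].
    pose proof (quad_pt _ _ _ t p1 p2 p3) as HP.
    unfold cK, uK, thK in HP.
    match goal with |- 0 <= ?e => replace e with
      ((0 ^ k + ((M - 1) * (INR k * M ^ k) - M ^ k)) * t ^ 2 +
       2 * ((M - 1) * (INR k * M ^ k) - M ^ k - ((M - 1) * s * (INR k * s ^ (k - 1)) - s ^ k)) * t +
       2 * (s ^ k - s * (s - 1) * (INR k * s ^ (k - 1)) -
         (M - 1) * (M - s) / M * (2 * s * (INR k * s ^ (k - 1)) + s ^ 2 * (INR k * INR (k - 1) * s ^ (k - 2))) +
         ((M - 1) * (INR k * M ^ k) - M ^ k))) by (field; lra) end.
    exact HP.
  - pose proof (Q 1 (-1) (M - 1) 0 0 0) as HQ.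
    replace (l0 + ((M - 1) * l2 - l1)) with (1 * l0 + -1 * l1 + (M - 1) * l2 + 0 * m1 + 0 * m2 + 0 * m3) by ring.
    apply HQ. intros k. destruct (pointwise M s k HM Hs) as [p1 _]. unfold cK in p1.
    match goal with |- 0 <= ?e => replace e with (0 ^ k + ((M - 1) * (INR k * M ^ k) - M ^ k)) by ring end.
    exact p1.
Qed.

Lemma Good_lin M a b al be : 0 <= al -> 0 <= be -> Good M a -> Good M b ->
  Good M (fun k => al * a k + be * b k).
Proof.
  intros Ha Hb [a0 [a1 a2]] [b0 [b1 b2]]. split; [|split].
  - intros k. specialize (a0 k); specialize (b0 k). nra.
  - eapply ex_series_ext; [|apply (ex_series_plus (fun k => al * (a k * M ^ k)) (fun k => be * (b k * M ^ k)))].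
    intros k; simpl; change (plus ?x ?y) with (x + y); ring.
    apply (ex_series_scal al (fun k => a k * M ^ k)); auto.
    apply (ex_series_scal be (fun k => b k * M ^ k)); auto.
  - eapply ex_series_ext; [|apply (ex_series_plus (fun k => al * (a k * (INR k * M ^ k))) (fun k => be * (b k * (INR k * M ^ k))))].
    intros k; simpl; change (plus ?x ?y) with (x + y); ring.
    apply (ex_series_scal al (fun k => a k * (INR k * M ^ k))); auto.
    apply (ex_series_scal be (fun k => b k * (INR k * M ^ k))); auto.
Qed.

Theorem lemma3p4 (m : nat) (hm : (2 <= m)%nat) (q : nat -> R)
  (hq : is_law q) (hq0 : q 0%nat = 0)
  (hq2 : exists k, (2 <= k)%nat /\ 0 < q k)
  (hmom : exists l, infinite_sum (fun k => q k * (INR k * INR m ^ k)) l)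
  (p : R) (hp1 : p <= 1) (hpc : p_crit m q < p)
  (n : nat) (s : R) (hs : 0 < s < INR m) :
  (delta_n m (init_law p q) n - phi_n m (init_law p q) n s) ^ 2
  <= 2 * (Hn m (init_law p q) n 0 + delta_n m (init_law p q) n)
       * Theta_n m (init_law p q) n s.
Proof.
  assert (HM : 2 <= INR m) by (apply (le_INR 2); auto).
  set (M := INR m) in *.
  destruct hq as [qpos _].
  destruct hmom as [lm hmom]. apply is_series_Reals in hmom.
  assert (Mp : forall k, 0 <= M ^ k) by (intros; apply pow_le; lra).
  assert (Q1 : forall k, 0 <= q k * M ^ k <= q k * (INR k * M ^ k)).
  { intros [|k]. rewrite hq0; lra. split. apply Rmult_le_pos; auto.
    apply Rmult_le_compat_l; auto. assert (1 <= INR (S k)) by (apply (le_INR 1); lia).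
    specialize (Mp (S k)). nra. }
  assert (Gq : Good M q).
  { split; [auto|split; [|exists lm; auto]]. apply (ex_series_bound _ _ Q1). exists lm; auto. }
  assert (pp : 0 <= p).
  { unfold p_crit in hpc. fold M in hpc.
    assert (EX : ex_series (fun k => q k * (((M - 1) * INR k - 1) * M ^ k))).
    { eapply ex_series_ext; [|apply (ex_series_minus (fun k => (M - 1) * (q k * (INR k * M ^ k))) (fun k => q k * M ^ k))].
      intros k; simpl; change (plus ?x (opp ?y)) with (x - y); ring.
      apply (ex_series_scal (M - 1) (fun k => q k * (INR k * M ^ k))). exists lm; auto.
      apply Gq. }
    apply Series_correct in EX.
    assert (E0 : 0 <= Series (fun k => q k * (((M - 1) * INR k - 1) * M ^ k))).
    { apply (is_series_ge0 _ _ EX). intros [|k]. rewrite hq0; lra.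
      apply Rmult_le_pos; auto. apply Rmult_le_pos; auto.
      assert (1 <= INR (S k)) by (apply (le_INR 1); lia). nra. }
    unfold expect in hpc. rewrite (series_val _ _ EX) in hpc.
    assert (0 < 1 / (1 + Series (fun k => q k * (((M - 1) * INR k - 1) * M ^ k)))) by
      (apply Rdiv_lt_0_compat; lra). lra. }
  assert (G0 : Good M (init_law p q)).
  { apply (Good_ext M (fun k => (1 - p) * delta0 k + p * q k)).
    intros k; unfold init_law, delta0; destruct (Nat.eqb k 0); ring.
    apply Good_lin; auto; try lra. apply delta0_good. }
  assert (Gn := law_good m M (init_law p q) n ltac:(lra) G0).
  pose proof (main_ineq M s _ HM hs Gn) as H. cbv zeta in H.
  unfold delta_n, phi_n, Theta_n, Hn, dHn, d2Hn. fold M. exact H.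
Qed.
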